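(* Let $p,q$ be positive integers with $p/q\ge4$, $k=\lfloor p/q\rfloor$, $r=p-kq\ge1$, and let $G'$ be the graph constructed from a graph $G$ as in the context. Let $h$ and $h'$ be $k$-colourings of $G$ which differ on exactly one vertex $u$, and let $\eta$ be a $(p,q)$-colouring of $G'$ such that $\eta(y_i)=i$ for all $i$, the restriction of $\eta$ to $V(G)$ is $\gamma\circ h$, and every path $P_{ab}$ has the standard path colouring with respect to $\eta$. Then there exists a $(p,q)$-colouring $\eta'$ of $G'$ such that every path $P_{ab}$ has the standard path colouring with respect to $\eta'$, the restriction of $\eta'$ to $V(G)$ is $\gamma\circ h'$, and $\eta$ reconfigures to $\eta'$.
   Context: Intervals $[a,b]=\{a,a+1,\dots,b\}$ are taken modulo $p$. A $(p,q)$-colouring is a map to $\{0,\dots,p-1\}$ with $q\le|\psi(x)-\psi(y)|\le p-q$ on every edge; a $k$-colouring is a proper colouring with colours $\{0,\dots,k-1\}$; $\eta$ reconfigures to $\eta'$ if there is a sequence of $(p,q)$-colourings of $G'$ from $\eta$ to $\eta'$, consecutive ones differing on at most one vertex. Let $t$ be the smallest positive integer with $(t+1)q\equiv r\pmod p$, and $\gamma(0)=0$, $\gamma(i)=iq+r$ for $1\le i\le k-1$. $G'$ is obtained from $G$ by adding a disjoint copy of the circular clique on $y_0,\dots,y_{p-1}$ ($y_iy_j$ an edge iff $q\le|i-j|\le p-q$), and for every edge $uv$ of $G$ two new paths $P_{uv}=u\,x_0^{uv}\cdots x_t^{uv}\,v$ and $P_{vu}=v\,x_0^{vu}\cdots x_t^{vu}\,u$,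 internally disjoint from everything else and each other, where $x_0^{ab},x_t^{ab}$ are joined to all $y_j$ with $j\in[3q-1,p-q-1]$ and $x_i^{ab}$ ($1\le i\le t-1$) to all $y_j$ with $j\in[(i+3)q-1,(i-1)q]$. A path $P_{ab}$ has the standard path colouring with respect to a colouring $\eta$ (whose values on $V(G)$ lie in $\{\gamma(0),\dots,\gamma(k-1)\}$) if: when $\eta(a)=0$, $\eta(x_i^{ab})=(i+1)q\bmod p$ for $0\le i\le t$; when $\eta(b)=0$, $\eta(x_i^{ab})=iq\bmod p$ for $0\le i\le t-1$ and $\eta(x_t^{ab})=q$; when $\eta(a)\ne0\ne\eta(b)$, $\eta(x_i^{ab})=iq\bmod p$ for $0\le i\le t-1$ and $\eta(x_t^{ab})=0$. *)

(* Defs.v *)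
From mathcomp Require Import all_boot.

Set Implicit Arguments.
Unset Strict Implicit.
Unset Printing Implicit Defensive.

Definition kk (p q : nat) : nat := p %/ q.
Definition rr (p q : nat) : nat := p %% q.

Definition absd (m n : nat) : nat := (m - n) + (n - m).

Definition pq_ok (p q c d : nat) : Prop := q <= absd c d /\ absd c d <= p - q.

(* j belongs to the cyclic interval [a,b] = {a, a+1, ..., b} taken mod p *)
Definition in_cyc (p a b j : nat) : bool :=
  (j + p - a %% p) %% p <= (b %% p + p - a %% p) %% p.

Definition gamma (p q i : nat) : nat := if i == 0 then 0 else i * q + rr p q.

(* ordered pairs (a,b) with ab an edge of G: each edge uv gives P_uv and P_vu *)
Definition dedge (T : finType) (e : rel T) := {ab : T * T | e ab.1 ab.2}.

(* vertices of G': V(G), y_0..y_{p-1}, and x_i^{ab} for 0 <= i <= t *)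
Inductive gvtx (T : finType) (e : rel T) (p t : nat) : Type :=
| VG of T
| VY of 'I_p
| VX of dedge e & 'I_t.+1.

Arguments VG {T e p t} _.
Arguments VY {T e p t} _.
Arguments VX {T e p t} _ _.

Definition gadj0 (T : finType) (e : rel T) (p q t : nat)
    (x y : gvtx e p t) : Prop :=
  match x, y with
  | VG u, VG v => e u v
  | VY i, VY j => pq_ok p q i j
  | VG a, VX ab i => (sval ab).1 = a /\ nat_of_ord i = 0
  | VX ab i, VX ab' j => ab = ab' /\ nat_of_ord j = (nat_of_ord i).+1
  | VX ab i, VG b => (sval ab).2 = b /\ nat_of_ord i = t
  | VX ab i, VY j =>
      if (nat_of_ord i == 0) || (nat_of_ord i == t)
      then in_cyc p (3 * q - 1) (p - q - 1) j
      else in_cyc p ((nat_of_ord i + 3) * q - 1) ((nat_of_ord i - 1) * q) j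
  | _, _ => False
  end.

Definition gadj (T : finType) (e : rel T) (p q t : nat) (x y : gvtx e p t) : Prop :=
  gadj0 q x y \/ gadj0 q y x.

Definition pqcol (T : finType) (e : rel T) (p q t : nat) (c : gvtx e p t -> nat) : Prop :=
  (forall x, c x < p) /\ (forall x y, gadj q x y -> pq_ok p q (c x) (c y)).

Definition kcol (T : finType) (e : rel T) (k : nat) (h : T -> nat) : Prop :=
  (forall v, h v < k) /\ (forall u v, e u v -> h u <> h v).

Definition std_path (T : finType) (e : rel T) (p q t : nat)
    (c : gvtx e p t -> nat) (ab : dedge e) : Prop :=
  forall i : 'I_t.+1,
    c (VX ab i) =
      if c (VG (sval ab).1) == 0 then ((nat_of_ord i).+1 * q) %% p
      else if c (VG (sval ab).2) == 0 then
        (if nat_of_ord i == t then q else (nat_of_ord i * q) %% p)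
      else (if nat_of_ord i == t then 0 else (nat_of_ord i * q) %% p).

Definition differ_le1 (V : Type) (c c' : V -> nat) : Prop :=
  forall w1 w2, c w1 <> c' w1 -> c w2 <> c' w2 -> w1 = w2.

Definition reconfig (T : finType) (e : rel T) (p q t : nat)
    (c c' : gvtx e p t -> nat) : Prop :=
  exists (n : nat) (f : nat -> gvtx e p t -> nat),
    (forall x, f 0 x = c x) /\ (forall x, f n x = c' x) /\
    (forall i, i <= n -> pqcol q (f i)) /\
    (forall i, i < n -> differ_le1 (f i) (f i.+1)).

(* Main.v *)
Require Import Defs.
From mathcomp Require Import all_boot zify.

Set Implicit Arguments. Unset Strict Implicit. Unset Printing Implicit Defensive.

Section Generic.
Variables (T : finType) (e : rel T) (p q t : nat).
Local Notation V := (gvtx e p t).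

Lemma absdC a b : absd a b = absd b a.
Proof. rewrite /absd; lia. Qed.

Lemma pq_sym c d : pq_ok p q c d -> pq_ok p q d c.
Proof. by rewrite /pq_ok absdC. Qed.

Lemma gadj_sym (x y : V) : gadj q x y -> gadj q y x.
Proof. by rewrite /gadj; case=> H; [right|left]. Qed.

Lemma differ_ext (c1 c2 d1 d2 : V -> nat) :
  (forall x, c1 x = c2 x) -> (forall x, d1 x = d2 x) -> differ_le1 c1 d1 -> differ_le1 c2 d2.
Proof. move=> E1 E2 D w1 w2; rewrite -!E1 -!E2; exact: D. Qed.

Lemma differ_symm (c d : V -> nat) : differ_le1 c d -> differ_le1 d c.
Proof. move=> D w1 w2 H1 H2; apply: D => H; [apply: H1|apply: H2]; by rewrite H. Qed.

Lemma reconfig_ext (c1 c2 c3 c4 : V -> nat) :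
  (forall x, c1 x = c2 x) -> (forall x, c3 x = c4 x) ->
  reconfig q c1 c3 -> reconfig q c2 c4.
Proof.
move=> E1 E3 [n [f [H0 [Hn [Hc Hd]]]]].
exists n, f; split; [by move=> x; rewrite H0 E1|split; [by move=> x; rewrite Hn E3|by []]].
Qed.

Lemma reconfig_refl (c : V -> nat) : pqcol q c -> reconfig q c c.
Proof. move=> Hc; exists 0, (fun _ => c); split=> //; split=> //. Qed.

Lemma reconfig_trans (c1 c2 c3 : V -> nat) :
  reconfig q c1 c2 -> reconfig q c2 c3 -> reconfig q c1 c3.
Proof.
move=> [n1 [f [F0 [Fn [Fc Fd]]]]] [n2 [g [G0 [Gn [Gc Gd]]]]].
exists (n1 + n2), (fun i => if i <= n1 then f i else g (i - n1)).
split; first by move=> x /=; rewrite F0.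
split.
  move=> x /=; case: ifP => H.
    have E : n2 = 0 by lia.
    subst n2; by rewrite addn0 Fn -G0 Gn.
  by rewrite addKn Gn.
split.
  move=> i Hi /=; case: ifP => H; first exact: Fc.
  apply: Gc; lia.
move=> i Hi /=; case: ifP => H1; case: ifP => H2.
- exact: Fd; lia.
- have Ei : i = n1 by lia.
  subst i; rewrite subSnn; apply: (differ_ext (c1:= g 0) (d1 := g 1)) => //.
    by move=> x; rewrite Fn G0.
  apply: Gd; lia.
- lia.
- have -> : i.+1 - n1 = (i - n1).+1 by lia.
  apply: Gd; lia.
Qed.

Lemma reconfig_sym (c1 c2 : V -> nat) : reconfig q c1 c2 -> reconfig q c2 c1.
Proof.
move=> [n [f [F0 [Fn [Fc Fd]]]]].
exists n, (fun i => f (n - i)); split; first by move=> x; rewrite subn0.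
split; first by move=> x; rewrite subnn.
split; first by move=> i Hi; apply: Fc; lia.
move=> i Hi; have -> : n - i = (n - i.+1).+1 by lia.
apply: differ_symm; apply: Fd; lia.
Qed.

Lemma mix_pqcol (c c' : V -> nat) (P : V -> bool) (D : V -> Prop) :
  pqcol q c -> pqcol q c' ->
  (forall x, c x <> c' x -> D x) -> (forall x y, D x -> D y -> ~ gadj q x y) ->
  pqcol q (fun x => if P x then c' x else c x).
Proof.
move=> [B1 E1] [B2 E2] HD HI; split; first by move=> x; case: (P x).
move=> x y Hxy.
case: (P x); case: (P y); try by [apply: E2|apply: E1].
- case: (eqVneq (c x) (c' x)) => ex; first by rewrite -ex; apply: E1.
  case: (eqVneq (c y) (c' y)) => ey; first by rewrite ey; apply: E2.
  exfalso; apply: (HI x y) => //; [apply: HD; exact/eqP|apply: HD; exact/eqP].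
- case: (eqVneq (c x) (c' x)) => ex; first by rewrite ex; apply: E2.
  case: (eqVneq (c y) (c' y)) => ey; first by rewrite -ey; apply: E1.
  exfalso; apply: (HI x y) => //; [apply: HD; exact/eqP|apply: HD; exact/eqP].
Qed.

Definition enc (x : V) : (T + ('I_p + (dedge e * 'I_t.+1)))%type :=
  match x with
  | VG v => inl v
  | VY i => inr (inl i)
  | VX ab i => inr (inr (ab, i))
  end.

Lemma enc_inj : injective enc.
Proof. by case=> [a|a|a b]; case=> [c|c|c d] //= [] -> //; move=> ->. Qed.

Definition rk (x : V) : nat := nat_of_ord (enum_rank (enc x)).

Lemma rk_inj x y : rk x = rk y -> x = y.
Proof. by move=> /ord_inj /enum_rank_inj /enc_inj. Qed.

Lemma reconfig_indep (c c' : V -> nat) (D : V -> Prop) :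
  pqcol q c -> pqcol q c' ->
  (forall x, c x <> c' x -> D x) -> (forall x y, D x -> D y -> ~ gadj q x y) ->
  reconfig q c c'.
Proof.
move=> Hc Hc' HD HI.
exists #|{: (T + ('I_p + (dedge e * 'I_t.+1)))%type}|,
  (fun s x => if rk x < s then c' x else c x).
split; first by move=> x.
split; first by move=> x; rewrite /rk ltn_ord.
split; first by move=> i _; apply: (mix_pqcol _ Hc Hc' HD HI).
move=> i _ w1 w2.
have key : forall w, (if rk w < i then c' w else c w) <> (if rk w < i.+1 then c' w else c w) -> rk w = i.
  move=> w; case: ltnP => H1; case: ltnP => H2 //; lia.
move=> /key H1 /key H2; apply: rk_inj; by rewrite H1 H2.
Qed.

End Generic.
Section Main.
Variables (p q t : nat).
Hypothesis Hq : 0 < q.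
Hypothesis Hp : 4 * q <= p.
Hypothesis HR : 1 <= rr p q.
Hypothesis Ht : (t.+1 * q) %% p = rr p q %% p.

Local Notation R := (rr p q).
Local Notation k := (kk p q).

Lemma p_pos : 0 < p. Proof. lia. Qed.

Lemma R_lt : R < q. Proof. rewrite /rr; exact: ltn_pmod. Qed.

Lemma p_eq : p = k * q + R. Proof. rewrite /kk /rr; exact: divn_eq. Qed.

Lemma k_ge4 : 4 <= k.
Proof. rewrite /kk; rewrite leq_divRL //. Qed.

Lemma modE x y M : x = y + M * p -> y < p -> x %% p = y.
Proof. move=> -> Hy; by rewrite addnC modnMDl modn_small. Qed.

Lemma modeq x y M : x = y + M * p -> x %% p = y %% p.
Proof. move=> ->; by rewrite addnC modnMDl. Qed.

Lemma pqE a0 b x d : a0 = x %% p -> b = (x + d) %% p -> q <= d -> d <= p - q ->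
  pq_ok p q a0 b.
Proof.
move=> -> -> H1 H2.
have pp := p_pos.
rewrite -modnDml.
have ha : x %% p < p by rewrite ltn_mod.
move: (x %% p) ha => a ha.
case: (ltnP (a + d) p) => H.
  rewrite modn_small //; rewrite /pq_ok /absd; lia.
rewrite (@modE (a + d) (a + d - p) 1); last lia; last lia.
rewrite /pq_ok /absd; lia.
Qed.

Lemma pqE' a b x d : a = x %% p -> b = (x + d) %% p -> q <= d -> d <= p - q ->
  pq_ok p q b a.
Proof. move=> *; rewrite /pq_ok absdC; apply: pqE; eassumption. Qed.

Lemma off_add a W : a < p -> W < p -> (((a + W) %% p) + p - a) %% p = W.
Proof.
move=> Ha HW; case: (ltnP (a + W) p) => H.
  rewrite (modn_small H); apply: (@modE _ _ 1); lia.
rewrite (@modE (a + W) (a + W - p) 1); [|lia|lia].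
rewrite modn_small; lia.
Qed.

Lemma win A B s W x :
  B %% p = (A + W) %% p -> W < p -> x = (A + s) %% p -> W + q <= s -> s <= p - q ->
  forall j, j < p -> in_cyc p A B j -> pq_ok p q x j.
Proof.
move=> HB HW Hx H1 H2 j Hj; rewrite /in_cyc HB -modnDml.
have pp := p_pos.
have ha : A %% p < p by rewrite ltn_mod.
rewrite off_add //.
rewrite Hx -modnDml; clear Hx HB.
move: (A %% p) ha => a ha.
have Ej : j = (a + (j + p - a) %% p) %% p.
  rewrite modnDmr; symmetry; apply: (@modE _ _ 1); lia.
have : (j + p - a) %% p < p by rewrite ltn_mod.
move: ((j + p - a) %% p) Ej => o Ej Ho Hoo.
apply: (@pqE' j _ (a + o) (s - o)) => //; [|lia|lia].
congr (_ %% p); lia.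
Qed.

Lemma midwin i d : 1 <= i -> d < 2 * q ->
  forall j, j < p -> in_cyc p ((i + 3) * q - 1) ((i - 1) * q) j ->
  pq_ok p q ((i * q + d) %% p) j.
Proof.
move=> Hi Hd.
have iq : q <= i * q by rewrite leq_pmull.
have E1 : (i + 3) * q = i * q + 3 * q by rewrite mulnDl.
have E2 : (i - 1) * q = i * q - q by rewrite mulnBl mul1n.
rewrite E1 E2.
apply: (@win _ _ (p + d - 3 * q + 1) (p - 4 * q + 1)); try lia.
  symmetry; apply: (@modeq _ _ 1); lia.
symmetry; apply: (@modeq _ _ 1); lia.
Qed.

Lemma endwin x : x < 2 * q \/ x = p - 1 ->
  forall j, j < p -> in_cyc p (3 * q - 1) (p - q - 1) j -> pq_ok p q x j.
Proof.
move=> Hx.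
have pp := p_pos.
case: Hx => Hx.
  apply: (@win _ _ (p + x - 3 * q + 1) (p - 4 * q)); try lia.
    congr (_ %% p); lia.
  symmetry; apply: (@modE _ _ 1); lia.
apply: (@win _ _ (p - 3 * q) (p - 4 * q)); try lia.
  congr (_ %% p); lia.
symmetry; apply: (@modE _ _ 0); lia.
Qed.


Lemma Rp : R < p. Proof. have := R_lt; lia. Qed.

Lemma Rmod : R %% p = R. Proof. by rewrite modn_small // Rp. Qed.

Definition Mt := (t.+1 * q) %/ p.

Lemma tq_eq : t * q + q = Mt * p + R.
Proof. by rewrite addnC -mulSn {1}(divn_eq (t.+1 * q) p) Ht Rmod. Qed.

Lemma Mt_ge : p <= Mt * p.
Proof.
have H := tq_eq; have := R_lt => Rq.
have : 0 < Mt by case: Mt H => [|n] //; rewrite mul0n; lia.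
move=> Hm; by rewrite leq_pmull.
Qed.

Lemma t_ge : 3 <= t.
Proof.
have H := tq_eq; have := Mt_ge; have := R_lt.
case: (leqP 3 t) => // Ht3.
have : t.+1 * q <= 3 * q by rewrite leq_mul2r Ht3 orbT.
rewrite mulSn; lia.
Qed.

Lemma tq_ge : 3 * q <= t * q.
Proof. by rewrite leq_mul2r t_ge orbT. Qed.

Lemma modE' x y M : x + p = y + M * p -> y < p -> x %% p = y.
Proof. move=> H Hy; by rewrite -(modnDr x p) H addnC modnMDl modn_small. Qed.

Lemma V1t : (t.+1 * q) %% p = R. Proof. by rewrite Ht Rmod. Qed.

Lemma V3t : (t * q + (2 * q - 1)) %% p = R + q - 1.
Proof. have := tq_eq; have := R_lt; have := Mt_ge; move=> *. apply: (modE' (M := Mt.+1)); rewrite ?mulSn; lia. Qed.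

Lemma b0_val : ((t - 1) * q) %% p = p + R - 2 * q.
Proof.
have := tq_eq; have := R_lt; have := Mt_ge; have := tq_ge; move=> *.
rewrite mulnBl mul1n; apply: (modE' (M := Mt)); lia.
Qed.

Lemma tm2_val : ((t - 2) * q) %% p = p + R - 3 * q.
Proof.
have := tq_eq; have := R_lt; have := Mt_ge; have := tq_ge; move=> *.
rewrite mulnBl; apply: (modE' (M := Mt)); lia.
Qed.

Definition winok i x := x < p /\ forall j, j < p ->
  (if (i == 0) || (i == t) then in_cyc p (3 * q - 1) (p - q - 1) j
   else in_cyc p ((i + 3) * q - 1) ((i - 1) * q) j) -> pq_ok p q x j.

Lemma winok_end i x : (i == 0) || (i == t) -> x < 2 * q \/ x = p - 1 -> winok i x.
Proof.
move=> Hi Hx; split; first by have := p_pos; lia.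
rewrite Hi; exact: endwin.
Qed.

Lemma winok_mid i d : 0 < i < t -> d < 2 * q -> winok i ((i * q + d) %% p).
Proof.
move=> /andP [H1 H2] Hd; split; first by rewrite ltn_mod p_pos.
have -> : (i == 0) || (i == t) = false by apply/negP => /orP [] /eqP; lia.
exact: midwin.
Qed.

Definition internal (F : nat -> nat) :=
  (forall i, i <= t -> winok i (F i)) /\ (forall i, i < t -> pq_ok p q (F i) (F i.+1)).

Lemma internal_mix A B s : internal A -> internal B ->
  (forall i, i < t -> pq_ok p q (A i) (B i.+1)) ->
  internal (fun i => if i < s then A i else B i).
Proof.
move=> [A1 A2] [B1 B2] C; split.
  by move=> i Hi; case: ifP => _; [apply: A1|apply: B1].
move=> i Hi; case: ifP => H1; case: ifP => H2.
- exact: A2.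
- exact: C.
- lia.
- exact: B2.
Qed.

Definition V1 i := (i.+1 * q) %% p.
Definition V3 i := (i * q + (2 * q - 1)) %% p.
Definition W i := if i == 0 then p - 1 else V3 i.
Definition G b c i := if i == t then c else if i == t - 1 then b else (i * q) %% p.
Definition b0 := ((t - 1) * q) %% p.
Definition B := p - q - 1.

Lemma internal_V1 : internal V1.
Proof.
have := R_lt; have := p_pos; move=> pp Rq.
split.
  move=> i Hi; rewrite /V1.
  case: (posnP i) => [->|Hi0].
    apply: winok_end => //; left; rewrite mul1n modn_small; lia.
  case: (eqVneq i t) => [->|Hit].
    apply: winok_end; [by rewrite eqxx orbT|left; rewrite V1t; lia].
  rewrite mulSn addnC; apply: winok_mid; lia.
move=> i Hi; apply: (pqE (x := i.+1 * q) (d := q)) => //; last lia.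
by rewrite /V1 [i.+2 * q]mulSn addnC.
Qed.

Lemma internal_V3 : internal V3.
Proof.
have := R_lt; have := p_pos; move=> pp Rq.
split.
  move=> i Hi; rewrite /V3.
  case: (posnP i) => [->|Hi0].
    apply: winok_end => //; left; rewrite mul0n add0n modn_small; lia.
  case: (eqVneq i t) => [->|Hit].
    apply: winok_end; [by rewrite eqxx orbT|left; rewrite V3t; lia].
  apply: winok_mid; lia.
move=> i Hi; apply: (pqE (x := i * q + (2 * q - 1)) (d := q)) => //; last lia.
by rewrite /V3 mulSn; congr (_ %% p); lia.
Qed.

Lemma internal_W : internal W.
Proof.
have := R_lt; have := p_pos; move=> pp Rq.
have [V31 V32] := internal_V3.
split.
  move=> i Hi; rewrite /W; case: eqP => [->|H]; last exact: V31.
  by apply: winok_end => //; right.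
move=> i Hi; rewrite /W /=; case: eqP => [->|H]; last exact: V32.
apply: (pqE (x := p - 1) (d := 3 * q)); try lia.
  by rewrite modn_small //; lia.
rewrite /V3 mul1n; rewrite (modn_small (m := q + _)); last lia.
symmetry; apply: (modE (M := 1)); lia.
Qed.

Lemma internal_G b c : winok (t - 1) b -> c < 2 * q \/ c = p - 1 ->
  pq_ok p q (((t - 2) * q) %% p) b -> pq_ok p q b c -> internal (G b c).
Proof.
have := t_ge; have := p_pos; move=> pp tg Wb Wc E1 E2.
split.
  move=> i Hi; rewrite /G.
  case: eqP => [->|H1]; first by apply: winok_end => //; rewrite eqxx orbT.
  case: eqP => [->|H2]; first by [].
  case: (posnP i) => [->|Hi0].
    apply: winok_end => //; left; rewrite mul0n mod0n; lia.
  rewrite -[i * q]addn0; apply: winok_mid; lia.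
move=> i Hi; rewrite /G.
have [E|N1] := eqVneq i.+1 t.
  have -> : i == t = false by apply/eqP; lia.
  by have -> : i == t - 1 by apply/eqP; lia.
have [E|N2] := eqVneq i.+1 (t - 1).
  have -> : i == t = false by apply/eqP; lia.
  have -> : i == t - 1 = false by apply/eqP; lia.
  by have -> : i = t - 2 by lia.
have -> : i == t = false by apply/eqP; lia.
have -> : i == t - 1 = false by apply/eqP; lia.
apply: (pqE (x := i * q) (d := q)) => //; last (have := Hp; lia).
by rewrite mulSn addnC.
Qed.

Lemma G_lt c i : i < t -> G b0 c i = (i * q) %% p.
Proof.
move=> Hi; rewrite /G; have -> : i == t = false by apply/eqP; lia.
case: eqP => // ->; by [].
Qed.


Lemma winok_b0 : winok (t - 1) b0.
Proof. have := t_ge => tg; rewrite /b0 -[(t - 1) * q]addn0; apply: winok_mid; lia. Qed.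

Lemma tm2_b0 : pq_ok p q (((t - 2) * q) %% p) b0.
Proof.
have := t_ge; have := tq_ge; move=> tg tq.
apply: (pqE (x := (t - 2) * q) (d := q)) => //; last lia.
rewrite /b0 !mulnBl; congr (_ %% p); lia.
Qed.

Lemma internal_Gb0 c : c = q \/ c = 0 -> internal (G b0 c).
Proof.
have := R_lt => Rq.
move=> Hc; apply: internal_G.
- exact: winok_b0.
- left; case: Hc => ->; lia.
- exact: tm2_b0.
- rewrite /b0 b0_val /pq_ok /absd; case: Hc => ->; lia.
Qed.

Lemma winok_B : winok (t - 1) B.
Proof.
have := t_ge; have := tq_ge; have := tq_eq; have := Mt_ge; have := R_lt; move=> *.
have -> : B = ((t - 1) * q + (q - R - 1)) %% p.
  symmetry; apply: (modE' (M := Mt)); rewrite /B ?mulnBl; lia.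
apply: winok_mid; lia.
Qed.

Lemma internal_GB c : c = q \/ c = 2 * q - 1 \/ c = p - 1 \/ c = 0 -> internal (G B c).
Proof.
have := R_lt => Rq.
move=> Hc; apply: internal_G.
- exact: winok_B.
- case: Hc => [->|[->|[->|->]]]; lia.
- rewrite tm2_val /B /pq_ok /absd; lia.
- rewrite /B /pq_ok /absd; case: Hc => [->|[->|[->|->]]]; lia.
Qed.

Lemma cross1 i : i < t -> pq_ok p q (V1 i) (V3 i.+1).
Proof. move=> Hi; apply: (pqE (x := i.+1 * q) (d := 2 * q - 1)) => //; lia. Qed.

Lemma cross2 c i : i < t -> pq_ok p q (G b0 c i) (V1 i.+1).
Proof.
move=> Hi; rewrite G_lt //; apply: (pqE (x := i * q) (d := 2 * q)) => //; try lia.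
by rewrite /V1 !mulSn; congr (_ %% p); lia.
Qed.

Lemma cross3 c i : i < t -> pq_ok p q (G b0 c i) (W i.+1).
Proof.
move=> Hi; rewrite G_lt //; apply: (pqE (x := i * q) (d := 3 * q - 1)) => //; try lia.
by rewrite /W /V3 /= ?mulSn; congr (_ %% p); lia.
Qed.

Lemma gamma_val j : 0 < j -> gamma p q j = j * q + R.
Proof. by rewrite /gamma; case: j. Qed.

Lemma jq_facts j : 0 < j < k -> q <= j * q /\ j * q + q <= k * q.
Proof.
move=> /andP [H1 H2]; split; first by rewrite leq_pmull.
by rewrite addnC -mulSn leq_mul2r H2 orbT.
Qed.

Lemma gamma_lt j : j < k -> gamma p q j < p.
Proof.
move=> Hj; have := p_eq; have := R_lt; move=> Rq pe.
case: (posnP j) => [->|Hj0]; first by rewrite /gamma /=; lia.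
have [J1 J2] : q <= j * q /\ j * q + q <= k * q by apply: jq_facts; lia.
rewrite gamma_val //; lia.
Qed.

Lemma gamma_ok a b : a < k -> b < k -> a <> b -> pq_ok p q (gamma p q a) (gamma p q b).
Proof.
have := p_eq; have := R_lt; move=> Rq pe.
wlog : a b / a < b.
  move=> IH Ha Hb Hab; case: (ltngtP a b) => H; [exact: IH| |by case: (Hab H)].
  apply: pq_sym; apply: (IH b a) => // E; by apply: Hab.
move=> Hab Ha Hb _.
have [J1 J2] : q <= b * q /\ b * q + q <= k * q by apply: jq_facts; lia.
case: (posnP a) => [->|Ha0].
  rewrite (gamma_val (j := b)); last lia; rewrite /gamma /=.
  rewrite /pq_ok /absd; lia.
have [I1 I2] : q <= a * q /\ a * q + q <= k * q by apply: jq_facts; lia.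
have : a.+1 * q <= b * q by rewrite leq_mul2r Hab orbT.
rewrite mulSn => H.
rewrite !gamma_val; try lia.
rewrite /pq_ok /absd; lia.
Qed.


Definition stdX ga gb i :=
  if ga == 0 then V1 i
  else if gb == 0 then (if i == t then q else (i * q) %% p)
  else (if i == t then 0 else (i * q) %% p).

Definition pathok ga gb F := internal F /\ pq_ok p q ga (F 0) /\ pq_ok p q (F t) gb.

Lemma internal_ext F F' : (forall i, i <= t -> F i = F' i) -> internal F -> internal F'.
Proof.
move=> E [I1 I2]; split; first by move=> i Hi; rewrite -E //; apply: I1.
move=> i Hi; rewrite -(E i) ?(ltnW Hi) // -(E i.+1) //; exact: I2.
Qed.

Lemma std_eq_G c i : i <= t -> (if i == t then c else (i * q) %% p) = G b0 c i.
Proof.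
move=> Hi; rewrite /G; case: eqP => // _; case: eqP => // ->; by [].
Qed.

Lemma std_pathok a b : a < k -> b < k -> a <> b ->
  pathok (gamma p q a) (gamma p q b) (stdX (gamma p q a) (gamma p q b)).
Proof.
have := p_eq; have := R_lt; have := t_ge; move=> tg Rq pe.
move=> Ha Hb Hab.
case: (posnP a) => [Ea|Ha0].
  have Hb0 : 0 < b by lia.
  have [J1 J2] : q <= b * q /\ b * q + q <= k * q by apply: jq_facts; lia.
  rewrite Ea (_ : gamma p q 0 = 0) // /stdX /= (gamma_val Hb0); split; first exact: internal_V1.
  rewrite /V1 mul1n V1t modn_small; last lia.
  rewrite /pq_ok /absd; lia.
have [I1 I2] : q <= a * q /\ a * q + q <= k * q by apply: jq_facts; lia.
rewrite /stdX (gamma_val Ha0).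
have -> : (a * q + R == 0) = false by apply/eqP; lia.
case: (posnP b) => [Eb|Hb0].
  rewrite Eb (_ : gamma p q 0 = 0) //=; split.
    apply: (internal_ext (F := G b0 q)); first by move=> i Hi; rewrite std_eq_G.
    apply: internal_Gb0; by left.
  have -> : (0 == t) = false by apply/eqP; lia.
  rewrite eqxx mul0n mod0n /pq_ok /absd. lia.
have [J1 J2] : q <= b * q /\ b * q + q <= k * q by apply: jq_facts; lia.
rewrite (gamma_val Hb0).
have -> : (b * q + R == 0) = false by apply/eqP; lia.
split.
  apply: (internal_ext (F := G b0 0)); first by move=> i Hi; rewrite std_eq_G.
  apply: internal_Gb0; by right.
have -> : (0 == t) = false by apply/eqP; lia.
rewrite eqxx mul0n mod0n /pq_ok /absd; lia.
Qed.

Section Graph.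
Variables (T : finType) (e : rel T).

Definition mkcol (g : T -> nat) (X : dedge e -> nat -> nat) : gvtx e p t -> nat :=
  fun x => match x with
  | VG v => g v
  | VY i => nat_of_ord i
  | VX ab i => X ab (nat_of_ord i)
  end.

Lemma mkcol_pqcol g X :
  (forall v, g v < p) -> (forall a b, e a b -> pq_ok p q (g a) (g b)) ->
  (forall ab : dedge e, pathok (g (sval ab).1) (g (sval ab).2) (X ab)) ->
  pqcol q (mkcol g X).
Proof.
move=> Hg He HX; split.
  case=> [v|i|ab i] /=; [exact: Hg|exact: ltn_ord|].
  by have [[I1 _] _] := HX ab; case: (I1 i (leq_ord i)).
suff H : forall x y, gadj0 q x y -> pq_ok p q (mkcol g X x) (mkcol g X y).
  move=> x y [] /H //; exact: pq_sym.
case=> [a|i|ab i]; case=> [b|j|cd j] //=.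
- exact: He.
- move=> [E1 E2]; rewrite E2 -E1; by have [_ [H _]] := HX cd.
- move=> [E1 E2]; rewrite E2 -E1; by have [_ [_ H]] := HX ab.
- move=> H; have [[I1 _] _] := HX ab; have [_ W1] := I1 i (leq_ord i).
  exact: W1 (ltn_ord j) H.
- move=> [E1 E2]; subst cd; rewrite E2.
  have [[_ I2] _] := HX ab; apply: I2; have := ltn_ord j; lia.
Qed.


Lemma stepG g1 g2 X u0 : irreflexive e -> (forall v, v <> u0 -> g1 v = g2 v) ->
  pqcol q (mkcol g1 X) -> pqcol q (mkcol g2 X) -> reconfig q (mkcol g1 X) (mkcol g2 X).
Proof.
move=> Hirr E P1 P2; apply: (reconfig_indep (D := fun x => x = VG u0)) => //.
  case=> [v|i|ab i] //= H.
  by have [->|N] := eqVneq v u0; [|case: H; apply: E; apply/eqP].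
move=> x y -> ->; rewrite /gadj /=; by rewrite Hirr; case.
Qed.

Lemma stepX g X1 X2 i0 : (forall ab j, j <> i0 -> X1 ab j = X2 ab j) ->
  pqcol q (mkcol g X1) -> pqcol q (mkcol g X2) -> reconfig q (mkcol g X1) (mkcol g X2).
Proof.
move=> E P1 P2.
apply: (reconfig_indep (D := fun x => exists ab (j : 'I_t.+1), x = VX ab j /\ nat_of_ord j = i0)) => //.
  case=> [v|i|ab i] //= H; exists ab, i; split => //.
  by have [//|N] := eqVneq (nat_of_ord i) i0; case: H; apply: E; apply/eqP.
move=> x y [ab [j [-> Ej]]] [cd [j' [-> Ej']]]; rewrite /gadj /=; case=> [] [_ H]; lia.
Qed.

Definition stdcol (g : T -> nat) : gvtx e p t -> nat :=
  mkcol g (fun ab => stdX (g (sval ab).1) (g (sval ab).2)).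

Lemma std_pqcol hh : irreflexive e -> kcol e k hh -> pqcol q (stdcol (fun v => gamma p q (hh v))).
Proof.
move=> Hirr [Hb Hp0]; apply: mkcol_pqcol.
- move=> v; exact: gamma_lt.
- move=> a b Hab; apply: gamma_ok; [exact: Hb|exact: Hb|exact: Hp0].
- case=> [[a b] Hab] /=; apply: std_pathok; [exact: Hb|exact: Hb|exact: Hp0].
Qed.

Lemma stdX_zero ga gb ga' gb' i : (ga == 0) = (ga' == 0) -> (gb == 0) = (gb' == 0) ->
  stdX ga gb i = stdX ga' gb' i.
Proof. by move=> E1 E2; rewrite /stdX E1 E2. Qed.

Lemma chain (F : nat -> gvtx e p t -> nat) n : pqcol q (F 0) ->
  (forall s, s < n -> reconfig q (F s) (F s.+1)) -> reconfig q (F 0) (F n).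
Proof.
move=> H0; elim: n => [|n IH] H; first exact: reconfig_refl.
apply: reconfig_trans (IH _) (H n _) => //; move=> s Hs; apply: H; lia.
Qed.

Lemma V1_0 : V1 0 = q. Proof. rewrite /V1 mul1n modn_small //; lia. Qed.
Lemma V1_t : V1 t = R. Proof. exact: V1t. Qed.
Lemma V3_0 : V3 0 = 2 * q - 1. Proof. rewrite /V3 mul0n add0n modn_small //; lia. Qed.
Lemma V3_t : V3 t = R + q - 1. Proof. exact: V3t. Qed.
Lemma W_0 : W 0 = p - 1. Proof. by []. Qed.
Lemma W_t : W t = R + q - 1. Proof. have := t_ge => tg; rewrite /W; case: eqP => [E|_]; first lia. exact: V3t. Qed.
Lemma G_t b c : G b c t = c. Proof. by rewrite /G eqxx. Qed.
Lemma G_0 b c : G b c 0 = 0.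
Proof. have := t_ge => tg; rewrite /G; case: eqP => [|_]; first lia; case: eqP => [|_]; first lia. by rewrite mul0n mod0n. Qed.
Lemma gamma0 : gamma p q 0 = 0. Proof. by []. Qed.

Definition mixf (A B : nat -> nat) s := fun i => if i < s then A i else B i.

Section Core.
Variables (u : T) (h0 h1 : T -> nat).
Hypothesis Hsym : symmetric e.
Hypothesis Hirr : irreflexive e.
Hypothesis K0 : kcol e k h0.
Hypothesis K1 : kcol e k h1.
Hypothesis Hdiff : forall v, v <> u -> h0 v = h1 v.
Hypothesis Hu0 : h0 u = 0.
Hypothesis Hm0 : 0 < h1 u.

Local Notation m := (h1 u).

Definition allowed j := 0 < j < k /\ j <> m.

Lemma nb_allowed v : e u v -> allowed (h0 v).
Proof.
move=> Huv; have [B0 P0] := K0; have [B1 P1] := K1.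
have Nv : v <> u by move=> E; subst v; by rewrite Hirr in Huv.
have H1 := P0 _ _ Huv; have H2 := P1 _ _ Huv.
rewrite Hu0 in H1.
split; first (apply/andP; split; [rewrite lt0n; apply/eqP; by auto|exact: B0]).
rewrite Hdiff //; by auto.
Qed.

Lemma nb_allowed' v : e v u -> allowed (h0 v).
Proof. rewrite Hsym; exact: nb_allowed. Qed.

Definition gU U v := if v == u then U else gamma p q (h0 v).
Definition XU (PU PV : nat -> nat) (ab : dedge e) :=
  if (sval ab).1 == u then PU else if (sval ab).2 == u then PV
  else stdX (gamma p q (h0 (sval ab).1)) (gamma p q (h0 (sval ab).2)).
Definition Col U PU PV := mkcol (gU U) (XU PU PV).

Definition Uok U := U < p /\ forall j, allowed j -> pq_ok p q U (gamma p q j).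
Definition PUok U F := internal F /\ pq_ok p q U (F 0) /\
  forall j, allowed j -> pq_ok p q (F t) (gamma p q j).
Definition PVok U F := internal F /\ pq_ok p q (F t) U /\
  forall j, allowed j -> pq_ok p q (gamma p q j) (F 0).
Definition okS U PU PV := Uok U /\ PUok U PU /\ PVok U PV.

Lemma ok_pqcol U PU PV : okS U PU PV -> pqcol q (Col U PU PV).
Proof.
move=> [[UB UA] [[I1 [A1 A2]] [I2 [B1 B2]]]]; apply: mkcol_pqcol.
- move=> v; rewrite /gU; case: eqP => _ //; apply: gamma_lt; by case: K0.
- move=> a b Hab; rewrite /gU.
  case: eqP => [Ea|Na]; case: eqP => [Eb|Nb].
  + by subst; rewrite Hirr in Hab.
  + subst a; apply: UA; exact: nb_allowed.
  + subst b; apply: pq_sym; apply: UA; exact: nb_allowed'.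
  + have [B0 P0] := K0; apply: gamma_ok; [exact: B0|exact: B0|exact: P0].
- case=> [[a b] Hab] /=; rewrite /XU /gU /=.
  case: eqP => [Ea|Na].
    subst a; have Nb : b <> u by move=> E; subst; rewrite Hirr in Hab.
    case: eqP => // _.
    split; [exact: I1|split; [exact: A1|apply: A2; exact: nb_allowed]].
  case: eqP => [Eb|Nb].
    subst b; split; [exact: I2|split; [apply: B2; exact: nb_allowed'|exact: B1]].
  have [B0 P0] := K0; apply: std_pathok; [exact: B0|exact: B0|exact: P0].
Qed.

Lemma Col_ext U PU PV PU' PV' : (forall i, i <= t -> PU i = PU' i) ->
  (forall i, i <= t -> PV i = PV' i) -> forall x, Col U PU PV x = Col U PU' PV' x.
Proof.
move=> E1 E2; case=> [v|i|ab i] //=; rewrite /XU.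
case: ifP => _; first exact: E1 (leq_ord i).
case: ifP => _ //; exact: E2 (leq_ord i).
Qed.

Lemma stepU U U' PU PV : okS U PU PV -> okS U' PU PV ->
  reconfig q (Col U PU PV) (Col U' PU PV).
Proof.
move=> O1 O2; apply: (stepG (u0 := u)) => //; try exact: ok_pqcol.
by move=> v Nv; rewrite /gU; case: eqP.
Qed.

Lemma stepPU U PU PU' PV i0 : (forall j, j <> i0 -> PU j = PU' j) ->
  okS U PU PV -> okS U PU' PV -> reconfig q (Col U PU PV) (Col U PU' PV).
Proof.
move=> E O1 O2; apply: (stepX (i0 := i0)); try exact: ok_pqcol.
move=> ab j Hj; rewrite /XU; case: ifP => _ //; exact: E.
Qed.

Lemma stepPV U PU PV PV' i0 : (forall j, j <> i0 -> PV j = PV' j) ->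
  okS U PU PV -> okS U PU PV' -> reconfig q (Col U PU PV) (Col U PU PV').
Proof.
move=> E O1 O2; apply: (stepX (i0 := i0)); try exact: ok_pqcol.
move=> ab j Hj; rewrite /XU; case: ifP => _ //; case: ifP => _ //; exact: E.
Qed.

Lemma mix_step A B s j : j <> s -> mixf A B s j = mixf A B s.+1 j.
Proof. move=> H; rewrite /mixf; case: ltnP => H1; case: ltnP => H2 //; lia. Qed.

Lemma G_step1 b c c' j : j <> t -> G b c j = G b c' j.
Proof. by move=> H; rewrite /G; case: eqP. Qed.

Lemma G_step2 b b' c j : j <> t - 1 -> G b c j = G b' c j.
Proof. by move=> H; rewrite /G; case: eqP => //; case: eqP. Qed.


Lemma allowed_facts j : allowed j -> gamma p q j = j * q + R /\ q <= j * q /\ j * q + q <= k * q.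
Proof. move=> [H1 H2]; rewrite gamma_val; [|by case/andP: H1]; split => //; exact: jq_facts. Qed.

Lemma allowed2 j : m = 1 -> allowed j -> 2 * q <= j * q.
Proof. move=> E [/andP [H1 _] H2]; rewrite leq_mul2r; apply/orP; right; lia. Qed.

Lemma Uok0 : Uok 0.
Proof.
have := p_eq; have := R_lt; move=> Rq pe.
split; first lia; move=> j /allowed_facts [-> [J1 J2]]; rewrite /pq_ok /absd; lia.
Qed.

Lemma PVok_G U b c : internal (G b c) -> pq_ok p q c U -> PVok U (G b c).
Proof.
have := p_eq; have := R_lt; move=> Rq pe.
move=> I H; split => //; split; first by rewrite G_t.
move=> j /allowed_facts [-> [J1 J2]]; rewrite G_0 /pq_ok /absd; lia.
Qed.

Lemma ok_S0 : okS 0 V1 (G b0 q).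
Proof.
have := p_eq; have := R_lt; move=> Rq pe.
split; first exact: Uok0.
split.
  split; first exact: internal_V1.
  split; first by rewrite V1_0 /pq_ok /absd; lia.
  move=> j /allowed_facts [-> [J1 J2]]; rewrite V1_t /pq_ok /absd; lia.
apply: PVok_G; first by apply: internal_Gb0; left.
rewrite /pq_ok /absd; lia.
Qed.

Lemma mR_facts : gamma p q m = m * q + R /\ m < k.
Proof. have [B1 _] := K1; split; [exact: gamma_val|exact: B1]. Qed.

Lemma Uok_mR : Uok (m * q + R).
Proof.
have [E Hk] := mR_facts; rewrite -E; split; first exact: gamma_lt.
move=> j [/andP [J0 Jk] Jm]; apply: gamma_ok => //; by auto.
Qed.

Section M2.
Hypothesis Hm2 : 2 <= m.

Lemma mq_facts : 2 * q <= m * q /\ m * q + q <= k * q.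
Proof.
have [E Hk] := mR_facts; split; first by rewrite leq_mul2r Hm2 orbT.
apply: (proj2 (jq_facts _)); lia.
Qed.

Lemma ok_S1 : okS (m * q + R) V1 (G b0 q).
Proof.
have := p_eq; have := R_lt; have := mq_facts; move=> [M1 M2] Rq pe.
split; first exact: Uok_mR.
split.
  split; first exact: internal_V1.
  split; first by rewrite V1_0 /pq_ok /absd; lia.
  move=> j /allowed_facts [-> [J1 J2]]; rewrite V1_t /pq_ok /absd; lia.
apply: PVok_G; first by apply: internal_Gb0; left.
rewrite /pq_ok /absd; lia.
Qed.

Lemma ok_S2 : okS (m * q + R) V1 (G b0 0).
Proof.
have := p_eq; have := R_lt; have := mq_facts; move=> [M1 M2] Rq pe.
have [_ [H _]] := ok_S1.
split; first exact: Uok_mR.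
split; first exact: H.
apply: PVok_G; first by apply: internal_Gb0; right.
rewrite /pq_ok /absd; lia.
Qed.

Lemma ok_L2 s : s <= t.+1 -> okS (m * q + R) (mixf (G b0 0) V1 s) (G b0 0).
Proof.
have := p_eq; have := R_lt; have := mq_facts; move=> [M1 M2] Rq pe Hs.
have [_ [_ H]] := ok_S2.
split; first exact: Uok_mR.
split => //.
split.
  apply: internal_mix; [by apply: internal_Gb0; right|exact: internal_V1|exact: cross2].
split.
  rewrite /mixf; case: ltnP => _; [rewrite G_0|rewrite V1_0]; rewrite /pq_ok /absd; lia.
move=> j /allowed_facts [-> [J1 J2]]; rewrite /mixf; case: ltnP => _;
  [rewrite G_t|rewrite V1_t]; rewrite /pq_ok /absd; lia.
Qed.

End M2.

Section M1.
Hypothesis Hm1 : m = 1.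

Lemma gam1 x j : x <= q + R -> allowed j -> pq_ok p q x (gamma p q j).
Proof.
have := p_eq; have := R_lt; move=> Rq pe Hx Hj.
have J3 := allowed2 Hm1 Hj; move: Hj => /allowed_facts [-> [J1 J2]].
rewrite /pq_ok /absd; lia.
Qed.

Lemma Uok1 U : U <= q + R -> Uok U.
Proof. have := R_lt; move=> Rq HU; split; first lia. move=> j; exact: gam1. Qed.

Lemma PUok_V3 U : pq_ok p q U (2 * q - 1) -> PUok U V3.
Proof.
have := R_lt => Rq H; split; first exact: internal_V3.
split; first by rewrite V3_0.
move=> j; rewrite V3_t; apply: gam1; lia.
Qed.

Lemma PUok_W U : pq_ok p q U (p - 1) -> PUok U W.
Proof.
have := R_lt => Rq H; split; first exact: internal_W.
split; first by rewrite W_0.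
move=> j; rewrite W_t; apply: gam1; lia.
Qed.

Lemma ok_R s : okS 0 (mixf V1 V3 s) (G b0 q).
Proof.
have := p_eq; have := R_lt; move=> Rq pe.
have [_ [_ H]] := ok_S0.
split; first exact: Uok0.
split => //.
split.
  apply: internal_mix; [exact: internal_V1|exact: internal_V3|exact: cross1].
split.
  rewrite /mixf; case: ltnP => _; [rewrite V1_0|rewrite V3_0]; rewrite /pq_ok /absd; lia.
move=> j Hj; rewrite /mixf; case: ltnP => _;
  [rewrite V1_t|rewrite V3_t]; apply: gam1 => //; lia.
Qed.

Ltac pqlia := rewrite /pq_ok /absd /B; (have := p_eq; have := R_lt; move=> *; lia).

Lemma ok_T c : c = q \/ c = 2 * q - 1 -> okS 0 V3 (G B c).
Proof.
move=> Hc; split; first exact: Uok0.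
split; first by apply: PUok_V3; pqlia.
apply: PVok_G; first by apply: internal_GB; case: Hc; auto.
case: Hc => ->; pqlia.
Qed.

Lemma ok_T3 : okS (q - 1) V3 (G B (2 * q - 1)).
Proof.
split; first by apply: Uok1; lia.
split; first by apply: PUok_V3; pqlia.
apply: PVok_G; first by apply: internal_GB; auto.
pqlia.
Qed.

Lemma ok_T4 c : c = 2 * q - 1 \/ c = p - 1 -> okS (q - 1) W (G B c).
Proof.
move=> Hc; split; first by apply: Uok1; lia.
split; first by apply: PUok_W; pqlia.
apply: PVok_G; first by apply: internal_GB; case: Hc; auto.
case: Hc => ->; pqlia.
Qed.

Lemma ok_T6 c : c = p - 1 \/ c = 0 -> okS (q + R) W (G B c).
Proof.
move=> Hc; split; first by apply: Uok1; lia.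
split; first by apply: PUok_W; pqlia.
apply: PVok_G; first by apply: internal_GB; case: Hc; auto.
case: Hc => ->; pqlia.
Qed.

Lemma ok_L s : okS (q + R) (mixf (G b0 0) W s) (G b0 0).
Proof.
split; first by apply: Uok1; lia.
split.
  split.
    apply: internal_mix; [by apply: internal_Gb0; right|exact: internal_W|exact: cross3].
  split.
    rewrite /mixf; case: ltnP => _; [rewrite G_0|rewrite W_0]; pqlia.
  move=> j Hj; rewrite /mixf; case: ltnP => _;
    [rewrite G_t|rewrite W_t]; apply: gam1 => //; have := R_lt; lia.
apply: PVok_G; first by apply: internal_Gb0; right.
pqlia.
Qed.

Lemma ok_T8 : okS (q + R) W (G b0 0).
Proof.
split; first by apply: Uok1; lia.
split; first by apply: PUok_W; pqlia.
apply: PVok_G; first by apply: internal_Gb0; right.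
pqlia.
Qed.

End M1.

Lemma reconfig_transE (c1 c2 c3 c4 : gvtx e p t -> nat) :
  reconfig q c1 c2 -> (forall x, c2 x = c3 x) -> reconfig q c3 c4 -> reconfig q c1 c4.
Proof.
move=> H1 E H2; apply: reconfig_trans H1 _.
apply: (reconfig_ext (c1 := c3) (c3 := c4)) => // x; by rewrite E.
Qed.


Lemma reconfig_ext_r (c1 c2 c3 : gvtx e p t -> nat) :
  reconfig q c1 c2 -> (forall x, c2 x = c3 x) -> reconfig q c1 c3.
Proof. move=> H E; exact: (reconfig_ext (c1 := c1) (c3 := c2)). Qed.

Lemma Estart x : Col 0 V1 (G b0 q) x = stdcol (fun v => gamma p q (h0 v)) x.
Proof.
case: x => [v|i|[[a b] /= Hab] i] //=.
  by rewrite /gU; case: eqP => [->|_] //; rewrite Hu0.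
rewrite /XU /gU /=.
case: eqP => [Ea|Na].
  by subst a; rewrite Hu0 gamma0 /stdX eqxx.
case: eqP => [Eb|Nb] //.
subst b; have [-> [J1 J2]] := allowed_facts (nb_allowed' Hab).
rewrite Hu0 gamma0 /stdX eqxx.
have -> : (h0 a * q + R == 0) = false by apply/eqP; lia.
by rewrite std_eq_G // -ltnS.
Qed.

Lemma Eend x : Col (m * q + R) (G b0 0) (G b0 0) x = stdcol (fun v => gamma p q (h1 v)) x.
Proof.
have [Em Hk] := mR_facts.
case: x => [v|i|[[a b] /= Hab] i] //=.
  rewrite /gU; case: eqP => [->|N] //; by rewrite Hdiff.
rewrite /XU /gU /=.
have Hi : nat_of_ord i <= t by rewrite -ltnS.
case: eqP => [Ea|Na].
  subst a; have Nb : b <> u by move=> E; subst; rewrite Hirr in Hab.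
  have [E2 [J1 J2]] := allowed_facts (nb_allowed Hab).
  rewrite -(Hdiff Nb) E2 Em /stdX.
  have -> : (m * q + R == 0) = false by apply/eqP; lia.
  have -> : (h0 b * q + R == 0) = false by apply/eqP; lia.
  by rewrite std_eq_G.
case: eqP => [Eb|Nb].
  subst b; have [E2 [J1 J2]] := allowed_facts (nb_allowed' Hab).
  rewrite -(Hdiff Na) E2 Em /stdX.
  have -> : (m * q + R == 0) = false by apply/eqP; lia.
  have -> : (h0 a * q + R == 0) = false by apply/eqP; lia.
  by rewrite std_eq_G.
by rewrite -(Hdiff Na) -(Hdiff Nb).
Qed.

Lemma core : reconfig q (stdcol (fun v => gamma p q (h0 v))) (stdcol (fun v => gamma p q (h1 v))).
Proof.
apply: (reconfig_ext (c1 := Col 0 V1 (G b0 q)) (c3 := Col (m * q + R) (G b0 0) (G b0 0)));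
  [exact: Estart|exact: Eend|].
case: (ltnP 1 m) => Hm.
  apply: (reconfig_trans (c2 := Col (m * q + R) V1 (G b0 q))).
    apply: stepU; [exact: ok_S0|exact: (ok_S1 Hm)].
  apply: (reconfig_transE (c2 := Col (m * q + R) V1 (G b0 0))
     (c3 := Col (m * q + R) (mixf (G b0 0) V1 0) (G b0 0))).
    apply: (stepPV (i0 := t)); [move=> j Hj; exact: G_step1|exact: (ok_S1 Hm)|exact: (ok_S2 Hm)].
    by apply: Col_ext.
  apply: (reconfig_ext_r (c2 := Col (m * q + R) (mixf (G b0 0) V1 t.+1) (G b0 0))); last first.
    by apply: Col_ext => // i Hi; rewrite /mixf ltnS Hi.
  apply: (chain (F := fun s => Col (m * q + R) (mixf (G b0 0) V1 s) (G b0 0))).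
    by apply: ok_pqcol; apply: (ok_L2 Hm).
  move=> s Hs; apply: (stepPU (i0 := s)); [exact: mix_step|apply: (ok_L2 Hm); lia|apply: (ok_L2 Hm); lia].
have Hm1 : m = 1 by lia.
rewrite Hm1 mul1n.
apply: (reconfig_transE (c2 := Col 0 V1 (G b0 q)) (c3 := Col 0 (mixf V1 V3 (t.+1 - 0)) (G b0 q))).
  apply: reconfig_refl; apply: ok_pqcol; exact: ok_S0.
  by apply: Col_ext => // i Hi; rewrite subn0 /mixf ltnS Hi.
apply: (reconfig_transE (c2 := Col 0 (mixf V1 V3 (t.+1 - t.+1)) (G b0 q))
   (c3 := Col 0 V3 (G b0 q))).
  apply: (chain (F := fun s => Col 0 (mixf V1 V3 (t.+1 - s)) (G b0 q))).
    apply: ok_pqcol; exact: (ok_R Hm1).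
  move=> s Hs; apply: (stepPU (i0 := t - s)); [|exact: (ok_R Hm1)|exact: (ok_R Hm1)].
  move=> j Hj; have -> : t.+1 - s = (t - s).+1 by lia.
  have -> : t.+1 - s.+1 = t - s by lia.
  symmetry; exact: mix_step.
  by apply: Col_ext => // i Hi; rewrite subnn.
apply: (reconfig_trans (c2 := Col 0 V3 (G B q))).
  apply: (stepPV (i0 := t - 1)); [move=> j Hj; exact: G_step2|exact: (ok_R Hm1 0)|].
  apply: (ok_T Hm1); by left.
apply: (reconfig_trans (c2 := Col 0 V3 (G B (2 * q - 1)))).
  apply: (stepPV (i0 := t)); [move=> j Hj; exact: G_step1| |];
  apply: (ok_T Hm1); by [left|right].
apply: (reconfig_trans (c2 := Col (q - 1) V3 (G B (2 * q - 1)))).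
  apply: stepU; [apply: (ok_T Hm1); by right|exact: (ok_T3 Hm1)].
apply: (reconfig_trans (c2 := Col (q - 1) W (G B (2 * q - 1)))).
  apply: (stepPU (i0 := 0)); [|exact: (ok_T3 Hm1)|apply: (ok_T4 Hm1); by left].
  by move=> j Hj; rewrite /W; case: eqP.
apply: (reconfig_trans (c2 := Col (q - 1) W (G B (p - 1)))).
  apply: (stepPV (i0 := t)); [move=> j Hj; exact: G_step1| |];
  apply: (ok_T4 Hm1); by [left|right].
apply: (reconfig_trans (c2 := Col (q + R) W (G B (p - 1)))).
  apply: stepU; [apply: (ok_T4 Hm1); by right|apply: (ok_T6 Hm1); by left].
apply: (reconfig_trans (c2 := Col (q + R) W (G B 0))).
  apply: (stepPV (i0 := t)); [move=> j Hj; exact: G_step1| |];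
  apply: (ok_T6 Hm1); by [left|right].
apply: (reconfig_transE (c2 := Col (q + R) W (G b0 0))
   (c3 := Col (q + R) (mixf (G b0 0) W 0) (G b0 0))).
  apply: (stepPV (i0 := t - 1)); [move=> j Hj; exact: G_step2| |exact: (ok_T8 Hm1)].
  apply: (ok_T6 Hm1); by right.
  by apply: Col_ext.
apply: (reconfig_ext_r (c2 := Col (q + R) (mixf (G b0 0) W t.+1) (G b0 0))); last first.
  by apply: Col_ext => // i Hi; rewrite /mixf ltnS Hi.
apply: (chain (F := fun s => Col (q + R) (mixf (G b0 0) W s) (G b0 0))).
  by apply: ok_pqcol; apply: (ok_L Hm1).
move=> s Hs; apply: (stepPU (i0 := s)); [exact: mix_step|exact: (ok_L Hm1)|exact: (ok_L Hm1)].
Qed.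

End Core.
End Graph. End Main.

Theorem lemma3p4 (p q : nat) (T : finType) (e : rel T) (t : nat)
    (h h' : T -> nat) (u : T) (eta : gvtx e p t -> nat) :
  0 < q -> 4 * q <= p -> 1 <= rr p q ->
  (* t is the smallest positive integer with (t+1) q = r (mod p) *)
  0 < t -> (t.+1 * q) %% p = rr p q %% p ->
  (forall t', 0 < t' -> (t'.+1 * q) %% p = rr p q %% p -> t <= t') ->
  (* G is a simple graph *)
  symmetric e -> irreflexive e ->
  kcol e (kk p q) h -> kcol e (kk p q) h' ->
  h u <> h' u -> (forall v, v <> u -> h v = h' v) ->
  pqcol q eta ->
  (forall i : 'I_p, eta (VY i) = nat_of_ord i) ->
  (forall v, eta (VG v) = gamma p q (h v)) ->
  (forall ab : dedge e, std_path q eta ab) ->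
  exists eta' : gvtx e p t -> nat,
    [/\ pqcol q eta',
        (forall ab : dedge e, std_path q eta' ab),
        (forall v, eta' (VG v) = gamma p q (h' v)) &
        reconfig q eta eta'].
Proof.
move=> Hq Hp HR Ht0 Ht Hmin Hsym Hirr K K' Hu Hd Pc HY HG Hstd.
exists (stdcol q (fun v => gamma p q (h' v))).
split.
- exact: (std_pqcol Hq Hp HR Ht).
- by move=> ab i.
- by [].
have E0 : forall x, stdcol q (fun v => gamma p q (h v)) x = eta x.
  case=> [v|i|ab i] /=; [by rewrite HG|by rewrite HY|].
  by rewrite Hstd !HG.
apply: (reconfig_ext (c1 := stdcol q (fun v => gamma p q (h v)))
   (c3 := stdcol q (fun v => gamma p q (h' v)))) => //.
have gnz : forall j, (gamma p q j == 0) = (j == 0).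
  move=> j; rewrite /gamma; case: (eqVneq j 0) => [_|Hj] //; by rewrite -[_ == 0]negbK -lt0n addn_gt0 HR orbT.
case: (posnP (h u)) => Hu0.
  apply: (core Hq Hp HR Ht Hsym Hirr K K' Hd Hu0); lia.
case: (posnP (h' u)) => Hu1.
  apply: reconfig_sym; apply: (core Hq Hp HR Ht Hsym Hirr K' K _ Hu1 Hu0).
  by move=> v Hv; rewrite Hd.
apply: (reconfig_indep (D := fun x => x = VG u)).
- exact: (std_pqcol Hq Hp HR Ht).
- exact: (std_pqcol Hq Hp HR Ht).
- case=> [v|i|ab i] //=.
  + by case: (eqVneq v u) => [->|N] // H; case: H; rewrite Hd //; apply/eqP.
  + move=> H; case: H; apply: stdX_zero; rewrite !gnz.
    * case: (eqVneq (sval ab).1 u) => [->|N]; first by have := Hu0; have := Hu1; case: (h u); case: (h' u).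
      by rewrite Hd //; apply/eqP.
    * case: (eqVneq (sval ab).2 u) => [->|N]; first by have := Hu0; have := Hu1; case: (h u); case: (h' u).
      by rewrite Hd //; apply/eqP.
- move=> x y -> ->; rewrite /gadj /=; by rewrite Hirr; case.
Qed.
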